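(* For every extreme point $(x,y,z)$ of the polyhedron GVC-LP, the vector $x$ is half-integral, i.e. $x_i\in\{0,\tfrac12,1\}$ for all $i\in V$.
   Context: Let $G=(V,E)$ be a graph. GVC-LP is the linear programming relaxation of the following mixed integer formulation of the generalized vertex cover problem (objective: minimize $\sum_{i\in V}c_ix_i+\sum_{(i,j)\in E}(q^2_{ij}-q^1_{ij})y_{ij}+\sum_{(i,j)\in E}(q^0_{ij}-q^1_{ij})z_{ij}$), with variables $x_i$ ($i\in V$), $y_{ij},z_{ij}$ ($(i,j)\in E$) and constraints: $x_i+x_j\le 1+y_{ij}$, $x_i\ge y_{ij}$, $x_j\ge y_{ij}$, $z_{ij}=1-x_i-x_j+y_{ij}$, $y_{ij}\ge 0$ for all $(i,j)\in E$, and $x_i\in\{0,1\}$, $z_{ij}\in\{0,1\}$. In GVC-LP the integrality constraints are replaced by $0\le x_i\le 1$ and $0\le z_{ij}\le 1$. Extreme points refer to the feasible region of GVC-LP. *)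

(* Defs.v *)
From mathcomp Require Import all_boot all_order all_algebra.
Set Implicit Arguments. Unset Strict Implicit. Unset Printing Implicit Defensive.
Import Order.TTheory GRing.Theory Num.Theory.
Local Open Scope ring_scope.

(* A finite simple graph G = (V, E): the edge set E is a set of ordered pairs
   (i,j) (each undirected edge listed once, in one orientation), with no loops. *)
Definition simple_edge_set (V : finType) (E : {set V * V}) : Prop :=
  (forall p, p \in E -> p.1 != p.2) /\
  (forall p, p \in E -> (p.2, p.1) \notin E).

Definition edge (V : finType) (E : {set V * V}) := {p : V * V | p \in E}.

Definition GVC_LP (R : realFieldType) (V : finType) (E : {set V * V})
    (x : V -> R) (y z : edge E -> R) : Prop :=
  (forall i, 0 <= x i <= 1) /\
  (forall e : edge E,
     let i := (val e).1 in let j := (val e).2 in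
     [/\ x i + x j <= 1 + y e, y e <= x i, y e <= x j & 0 <= y e] /\
     (z e = 1 - x i - x j + y e /\ 0 <= z e <= 1)).

Definition GVC_extreme (R : realFieldType) (V : finType) (E : {set V * V})
    (x : V -> R) (y z : edge E -> R) : Prop :=
  GVC_LP x y z /\
  forall (x1 x2 : V -> R) (y1 y2 z1 z2 : edge E -> R) (lam : R),
    GVC_LP x1 y1 z1 -> GVC_LP x2 y2 z2 -> 0 < lam < 1 ->
    (forall i, x i = lam * x1 i + (1 - lam) * x2 i) ->
    (forall e, y e = lam * y1 e + (1 - lam) * y2 e) ->
    (forall e, z e = lam * z1 e + (1 - lam) * z2 e) ->
    (forall i, x1 i = x2 i) /\ (forall e, y1 e = y2 e) /\ (forall e, z1 e = z2 e).

(* Main.v *)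
Require Import Defs.
From mathcomp Require Import all_boot all_order all_algebra.
From mathcomp Require Import ring lra.
Import Order.TTheory GRing.Theory Num.Theory.
Set Implicit Arguments. Unset Strict Implicit.
Local Open Scope ring_scope.
Definition ph (R:realFieldType) (s t : R) := t + s * (t*(1-t)*(1-2*t)).
Lemma ph_mono (R:realFieldType) (s a b : R) : -4^-1 <= s <= 4^-1 -> 0<=a -> a <= 1 -> 0 <= b -> b<=1 -> a <= b ->
  ph s a <= ph s b.
Proof.
move=> /andP[s1 s2] a0 a1 b0 b1 ab.
set h := 1 - 3*(a+b) + 2*(a*a+a*b+b*b).
have hl : -2 <= h.
  have := sqr_ge0 (2*a - 3/2); have := sqr_ge0 (2*b-3/2); have := mulr_ge0 a0 b0. rewrite /h. nra.
have hu : h <= 3.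
  have a1' : 0 <= 1 - a by lra. have b1' : 0 <= 1 - b by lra.
  have := mulr_ge0 a0 a1'; have := mulr_ge0 b0 b1'; have := mulr_ge0 a0 b0; have := mulr_ge0 a1' b1'. rewrite /h. nra.
have e : ph s b - ph s a = (b-a)*(1+s*h) by rewrite /ph /h; ring.
rewrite -subr_ge0 e; apply: mulr_ge0; first by lra.
nra.
Qed.

Lemma ph_sym (R:realFieldType) (s t : R) : ph s (1-t) = 1 - ph s t.
Proof. rewrite /ph; ring. Qed.

Lemma ph_01 (R:realFieldType) (s t : R) : -4^-1 <= s <= 4^-1 -> 0 <= t -> t <= 1 ->
  0 <= ph s t /\ ph s t <= 1.
Proof.
move=> hs t0 t1; split.
  have := ph_mono hs (lexx 0) ler01 t0 t1 t0. by rewrite /ph !(mul0r, mulr0, addr0).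
have := ph_mono hs t0 t1 ler01 (lexx 1) t1.
by rewrite /ph subrr !(mul0r, mulr0, addr0).
Qed.

Lemma ph_avg (R:realFieldType) (s t : R) : ph s t + ph (-s) t = 2 * t.
Proof. rewrite /ph; ring. Qed.

Definition wsel (R:realFieldType) (s a b v : R) :=
  if v == a then ph s a else if v == b then ph s b else if v == 0 then 0
  else ph s a + ph s b - 1.

Lemma wsel_avg (R:realFieldType) (s a b v : R) :
  (v = a \/ v = b \/ v = 0 \/ v = a+b-1) -> wsel s a b v + wsel (-s) a b v = 2 * v.
Proof.
move=> H; rewrite /wsel.
case: eqP => [->|na]; first exact: ph_avg.
case: eqP => [->|nb]; first exact: ph_avg.
case: eqP => [->|n0]; first by rewrite addr0 mulr0.
have -> : v = a + b - 1 by case: H => [//|[//|[//|//]]].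
have := ph_avg s a; have := ph_avg s b; lra.
Qed.

Lemma wsel_ok (R:realFieldType) (s a b v : R) : -4^-1 <= s <= 4^-1 ->
  0 <= a -> a <= 1 -> 0 <= b -> b <= 1 ->
  a + b <= 1 + v -> v <= a -> v <= b -> 0 <= v ->
  (v = a \/ v = b \/ v = 0 \/ v = a+b-1) ->
  [/\ ph s a + ph s b <= 1 + wsel s a b v, wsel s a b v <= ph s a,
      wsel s a b v <= ph s b & 0 <= wsel s a b v].
Proof.
move=> hs a0 a1 b0 b1 h1 h2 h3 h4 H.
have [pa0 pa1] := ph_01 hs a0 a1.
have [pb0 pb1] := ph_01 hs b0 b1.
rewrite /wsel.
case: eqP => [ea|na].
  have m := ph_mono hs a0 a1 b0 b1 (ltac:(lra) : a <= b).
  split; lra.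
case: eqP => [eb|nb].
  have m := ph_mono hs b0 b1 a0 a1 (ltac:(lra) : b <= a).
  split; lra.
case: eqP => [e0|n0].
  have b0' : 0 <= 1 - b by lra. have b1' : 1 - b <= 1 by lra.
  have := ph_mono hs a0 a1 b0' b1' (ltac:(lra) : a <= 1 - b).
  rewrite ph_sym => m.
  split; lra.
have ev : v = a + b - 1 by case: H => [//|[//|[//|//]]].
have b0' : 0 <= 1 - b by lra. have b1' : 1 - b <= 1 by lra.
have := ph_mono hs b0' b1' a0 a1 (ltac:(lra) : 1 - b <= a).
rewrite ph_sym => m.
split; lra.
Qed.

Theorem theorem5 (R : realFieldType) (V : finType) (E : {set V * V})
    (HE : simple_edge_set E) (x : V -> R) (y z : edge E -> R) :
  GVC_extreme x y z ->
  forall i : V, x i = 0 \/ x i = 2^-1 \/ x i = 1.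
Proof.
move=> [[Hx He] Hext] i.
have Hy : forall e : edge E, y e = x (val e).1 \/ y e = x (val e).2 \/ y e = 0 \/
            y e = x (val e).1 + x (val e).2 - 1.
  move=> e.
  have [[c1 c2 c3 c4] [ze _]] := He e.
  set a := x (val e).1 in c1 c2 c3 c4 ze *.
  set b := x (val e).2 in c1 c2 c3 c4 ze *.
  case: (eqVneq (y e) a) => [->|na]; first by left.
  case: (eqVneq (y e) b) => [->|nb]; first by right; left.
  case: (eqVneq (y e) 0) => [->|n0]; first by right; right; left.
  case: (eqVneq (y e) (a+b-1)) => [->|n1]; first by right; right; right.
  exfalso.
  have g1 : 0 < a - y e by rewrite subr_gt0 lt_neqAle na c2.
  have g2 : 0 < b - y e by rewrite subr_gt0 lt_neqAle nb c3.
  have g3 : 0 < y e by rewrite lt_neqAle eq_sym n0 c4.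
  have g4 : 0 < y e - (a + b - 1) by rewrite subr_gt0 lt_neqAle eq_sym n1 /=; lra.
  set d := Num.min (Num.min (a - y e) (b - y e)) (Num.min (y e) (y e - (a + b - 1))).
  have d0 : 0 < d by rewrite !lt_min g1 g2 g3 g4.
  have : d <= a - y e /\ d <= b - y e /\ d <= y e /\ d <= y e - (a+b-1).
    by rewrite /d !ge_min !lexx !orbT.
  move=> [d1 [d2 [d3 d4]]].
  pose y1 := fun e' => if e' == e then y e + d else y e'.
  pose y2 := fun e' => if e' == e then y e - d else y e'.
  pose z1 := fun e' : edge E => 1 - x (val e').1 - x (val e').2 + y1 e'.
  pose z2 := fun e' : edge E => 1 - x (val e').1 - x (val e').2 + y2 e'.
  have L1 : GVC_LP x y1 z1.
    split=> // e'; rewrite /z1 /y1; case: eqP => [->|_]; last first.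
      by have [h1 [h2 h3]] := He e'; rewrite -h2.
    rewrite -/a -/b; split; [split|split]; lra.
  have L2 : GVC_LP x y2 z2.
    split=> // e'; rewrite /z2 /y2; case: eqP => [->|_]; last first.
      by have [h1 [h2 h3]] := He e'; rewrite -h2.
    rewrite -/a -/b; split; [split|split]; lra.
  have hl : 0 < (2:R)^-1 < 1 by apply/andP; split; lra.
  have hx : forall v, x v = 2^-1 * x v + (1 - 2^-1) * x v by move=> v; lra.
  have hy : forall e', y e' = 2^-1 * y1 e' + (1 - 2^-1) * y2 e'.
    by move=> e'; rewrite /y1 /y2; case: eqP => [->|_]; lra.
  have hz : forall e', z e' = 2^-1 * z1 e' + (1 - 2^-1) * z2 e'.
    move=> e'; have [_ [-> _]] := He e'; rewrite /z1 /z2 /y1 /y2 /=.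
    case: eqP => [->|_]; lra.
  have [_ [/(_ e) H _]] := Hext x x y1 y2 z1 z2 2^-1 L1 L2 hl hx hy hz.
  rewrite /y1 /y2 eqxx in H. lra.
pose s : R := 4^-1.
have hs1 : -4^-1 <= s <= 4^-1 by apply/andP; rewrite /s; split; lra.
have hs2 : -4^-1 <= -s <= 4^-1 by apply/andP; rewrite /s; split; lra.
pose x1 := fun v => ph s (x v).
pose x2 := fun v => ph (-s) (x v).
pose y1 := fun e : edge E => wsel s (x (val e).1) (x (val e).2) (y e).
pose y2 := fun e : edge E => wsel (-s) (x (val e).1) (x (val e).2) (y e).
pose z1 := fun e' : edge E => 1 - x1 (val e').1 - x1 (val e').2 + y1 e'.
pose z2 := fun e' : edge E => 1 - x2 (val e').1 - x2 (val e').2 + y2 e'.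
have LP : forall t, -4^-1 <= t <= 4^-1 ->
    GVC_LP (fun v => ph t (x v))
      (fun e : edge E => wsel t (x (val e).1) (x (val e).2) (y e))
      (fun e' : edge E => 1 - ph t (x (val e').1) - ph t (x (val e').2)
                + wsel t (x (val e').1) (x (val e').2) (y e')).
  move=> t ht; split.
    move=> v; have /andP[h0 h1] := Hx v; have [] := ph_01 ht h0 h1.
    by move=> -> ->.
  move=> e /=.
  have [[c1 c2 c3 c4] _] := He e.
  have /andP[a0 a1] := Hx (val e).1; have /andP[b0 b1] := Hx (val e).2.
  have [w1 w2 w3 w4] := wsel_ok ht a0 a1 b0 b1 c1 c2 c3 c4 (Hy e).
  have [] := ph_01 ht a0 a1; have [] := ph_01 ht b0 b1.
  move=> *; split; [split|split] => //; try lra.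
have hl : 0 < (2:R)^-1 < 1 by apply/andP; split; lra.
have hx : forall v, x v = 2^-1 * x1 v + (1 - 2^-1) * x2 v.
  by move=> v; have := ph_avg s (x v); rewrite /x1 /x2; lra.
have hy : forall e', y e' = 2^-1 * y1 e' + (1 - 2^-1) * y2 e'.
  by move=> e'; have := wsel_avg s (Hy e'); rewrite /y1 /y2; lra.
have hz : forall e', z e' = 2^-1 * z1 e' + (1 - 2^-1) * z2 e'.
  move=> e'; have [_ [-> _]] := He e'; rewrite /z1 /z2 /=.
  have := hx (val e').1; have := hx (val e').2; have := hy e'. lra.
have [/(_ i) H _] := Hext x1 x2 y1 y2 z1 z2 2^-1 (LP s hs1) (LP (-s) hs2) hl hx hy hz.
move: H; rewrite /x1 /x2 /ph /s => H.
have : x i * (1 - x i) * (1 - 2 * x i) = 0 by lra.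
move/eqP; rewrite !mulf_eq0 => /orP[/orP[/eqP ->|]|]; first by left.
  by rewrite subr_eq0 => /eqP <-; right; right.
move=> /eqP h; right; left; lra.
Qed.
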